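(* If $S,T\in \mathcal{B}_{A}(\mathcal{H})$, then $$d\omega _{A_{0}}\left( \begin{bmatrix} S & 0 \\ 0 & T \end{bmatrix} \right) =\max \left\{ d\omega _{A}\left( S\right) ,d\omega _{A}\left( T\right) \right\}.$$
   Context: $\mathcal{H}$ is a complex Hilbert space and $A\in\mathcal{B}(\mathcal{H})$ is a positive operator; $\langle x,z\rangle_A=\langle Ax,z\rangle$ and $\|z\|_A=\|A^{1/2}z\|$. $\mathcal{B}_A(\mathcal{H})$ denotes the set of bounded operators $S$ on $\mathcal{H}$ admitting an $A$-adjoint, i.e. with $\mathcal{R}(S^*A)\subseteq\mathcal{R}(A)$. The $A$-Davis-Wielandt radius is $d\omega_A(S)=\sup\{(|\langle Sz,z\rangle_A|^2+\|Sz\|_A^4)^{1/2}: z\in\mathcal{H},\ \|z\|_A=1\}$. $A_0=\begin{bmatrix} A&0\\0&A\end{bmatrix}$ is the positive operator on $\mathcal{H}\oplus\mathcal{H}$, inducing $\langle x,z\rangle_{A_0}=\langle x_1,z_1\rangle_A+\langle x_2,z_2\rangle_A$ for $x=(x_1,x_2)$, $z=(z_1,z_2)$, and $d\omega_{A_0}$ is the corresponding $A_0$-Davis-Wielandt radius on $\mathcal{H}\oplus\mathcal{H}$. *)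

(* Defs.v *)
From HB Require Import structures.
From mathcomp Require Import all_boot all_order all_algebra.
From mathcomp Require Import all_classical all_reals.
From mathcomp Require Import complex.
From mathcomp Require Import ereal.

Set Implicit Arguments.
Unset Strict Implicit.
Unset Printing Implicit Defensive.

Import Order.TTheory GRing.Theory Num.Theory.
Local Open Scope ring_scope.
Local Open Scope classical_set_scope.

Definition ipnorm (R : realType) (X : Type) (ip : X -> X -> R[i]) (x : X) : R :=
  Num.sqrt (complex.Re (ip x x)).

Definition is_hilbert (R : realType) (V : lmodType R[i]) (ip : V -> V -> R[i]) : Prop :=
  [/\ (forall (a : R[i]) (x y z : V), ip (a *: x + y) z = a * ip x z + ip y z),
      (forall x y : V, ip y x = (ip x y)^*),
      (forall x : V, 0 <= ip x x),
      (forall x : V, ip x x = 0 -> x = 0) &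
      (forall u : nat -> V,
         (forall e : R, 0 < e -> exists N : nat, forall m n : nat,
             (N <= m)%N -> (N <= n)%N -> ipnorm ip (u m - u n) < e) ->
         exists l : V, forall e : R, 0 < e -> exists N : nat, forall n : nat,
             (N <= n)%N -> ipnorm ip (u n - l) < e)].

Definition bounded_op (R : realType) (V : lmodType R[i]) (ip : V -> V -> R[i])
    (f : V -> V) : Prop :=
  (forall (a : R[i]) (x y : V), f (a *: x + y) = a *: f x + f y) /\
  exists M : R, forall x : V, ipnorm ip (f x) <= M * ipnorm ip x.

Definition positive_op (R : realType) (V : lmodType R[i]) (ip : V -> V -> R[i])
    (A : V -> V) : Prop :=
  bounded_op ip A /\ forall x : V, 0 <= ip (A x) x.

Definition is_adjoint (R : realType) (V : lmodType R[i]) (ip : V -> V -> R[i])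
    (S Sstar : V -> V) : Prop :=
  forall x y : V, ip (S x) y = ip x (Sstar y).

(* S \in B_A(H): S is bounded and R(S^* A) \subseteq R(A). *)
Definition in_BA (R : realType) (V : lmodType R[i]) (ip : V -> V -> R[i])
    (A S : V -> V) : Prop :=
  bounded_op ip S /\
  exists Sstar : V -> V, bounded_op ip Sstar /\ is_adjoint ip S Sstar /\
    forall x : V, exists y : V, Sstar (A x) = A y.

Definition ipA (R : realType) (V : lmodType R[i]) (ip : V -> V -> R[i])
    (A : V -> V) (x z : V) : R[i] := ip (A x) z.

Definition ipA0 (R : realType) (V : lmodType R[i]) (ip : V -> V -> R[i])
    (A : V -> V) (x z : V * V) : R[i] := ipA ip A x.1 z.1 + ipA ip A x.2 z.2.

Definition diag_op (V : Type) (S T : V -> V) (x : V * V) : V * V := (S x.1, T x.2).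

Definition dw_radius (R : realType) (X : Type) (ipX : X -> X -> R[i]) (S : X -> X)
    : \bar R :=
  ereal_sup [set (Num.sqrt (complex.Re `|ipX (S z) z| ^+ 2 + ipnorm ipX (S z) ^+ 4))%:E
            | z in [set z | ipnorm ipX z = 1]].

Definition dwA (R : realType) (V : lmodType R[i]) (ip : V -> V -> R[i])
    (A S : V -> V) : \bar R := dw_radius (ipA ip A) S.

Definition dwA0 (R : realType) (V : lmodType R[i]) (ip : V -> V -> R[i])
    (A : V -> V) (S : V * V -> V * V) : \bar R := dw_radius (ipA0 ip A) S.

(* Main.v *)
Require Import Defs.
From HB Require Import structures.
From mathcomp Require Import all_boot all_order all_algebra.
From mathcomp Require Import all_classical all_reals.
From mathcomp Require Import complex.
From mathcomp Require Import ereal.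
From mathcomp Require Import ring lra.
Import Order.TTheory GRing.Theory Num.Theory.
Local Open Scope ring_scope.
Section Aux.
Variable R : realType.
Implicit Types (x y : R[i]) (k : R).
Lemma ReD x y : complex.Re (x + y) = complex.Re x + complex.Re y. Proof. by case: x; case: y. Qed.
Lemma ImD x y : complex.Im (x + y) = complex.Im x + complex.Im y. Proof. by case: x; case: y. Qed.
Lemma ReM x y : complex.Re (x * y) = complex.Re x * complex.Re y - complex.Im x * complex.Im y. Proof. by case: x; case: y. Qed.
Lemma ImM x y : complex.Im (x * y) = complex.Re x * complex.Im y + complex.Im x * complex.Re y. Proof. by case: x => a b; case: y => c d /=; rewrite addrC. Qed.
Lemma ReJ x : complex.Re (Num.conj x) = complex.Re x. Proof. by case: x. Qed.
Lemma ImJ x : complex.Im (Num.conj x) = - complex.Im x. Proof. by case: x. Qed.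
Lemma ReC k : complex.Re (k%:C%C) = k. Proof. by []. Qed.
Lemma ImC k : complex.Im (k%:C%C) = 0. Proof. by []. Qed.
Lemma Rei : complex.Re ('i%C : R[i]) = 0. Proof. by []. Qed.
Lemma Imi : complex.Im ('i%C : R[i]) = 1. Proof. by []. Qed.
Lemma ge0C x : 0 <= x -> complex.Im x = 0 /\ 0 <= complex.Re x.
Proof. by rewrite lecE /= => /andP[/eqP <- ->]. Qed.
Lemma Ceq x y : complex.Re x = complex.Re y -> complex.Im x = complex.Im y -> x = y.
Proof. by case: x; case: y => /= ? ? ? ? -> ->. Qed.
Lemma ReN x : complex.Re (- x) = - complex.Re x. Proof. by case: x. Qed.
Lemma ImN x : complex.Im (- x) = - complex.Im x. Proof. by case: x. Qed.
Lemma Re0 : complex.Re (0 : R[i]) = 0. Proof. by []. Qed.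
Lemma Im0 : complex.Im (0 : R[i]) = 0. Proof. by []. Qed.
Lemma Renorm x : complex.Re `|x| = Num.sqrt (complex.Re x ^+ 2 + complex.Im x ^+ 2).
Proof. by case: x. Qed.
Lemma conjC_real k : Num.conj (k%:C%C : R[i]) = k%:C%C.
Proof. by apply: Ceq; rewrite ?ReJ ?ImJ //= oppr0. Qed.
End Aux.
Arguments ge0C {R x}.

Section R.
Variable R : realType.
Definition val3 (a b p : R) := Num.sqrt (a ^+ 2 + b ^+ 2 + p ^+ 2).

Lemma val3_tri a1 b1 p1 a2 b2 p2 :
  val3 (a1 + a2) (b1 + b2) (p1 + p2) <= val3 a1 b1 p1 + val3 a2 b2 p2.
Proof.
rewrite /val3.
set Y := a1 ^+ 2 + b1 ^+ 2 + p1 ^+ 2; set Z := a2 ^+ 2 + b2 ^+ 2 + p2 ^+ 2.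
have Y0 : 0 <= Y by rewrite /Y; nra.
have Z0 : 0 <= Z by rewrite /Z; nra.
have sY := sqrtr_ge0 Y; have sZ := sqrtr_ge0 Z.
have -> : Num.sqrt Y + Num.sqrt Z = Num.sqrt ((Num.sqrt Y + Num.sqrt Z) ^+ 2).
  by rewrite sqrtr_sqr ger0_norm // addr_ge0.
rewrite ler_sqrt; last by rewrite sqr_ge0.
set D := a1 * a2 + b1 * b2 + p1 * p2.
have HD : D <= Num.sqrt Y * Num.sqrt Z.
  case: (lerP D 0) => hD; first by apply: le_trans hD _; exact: mulr_ge0.
  rewrite -sqrtrM // -(ger0_norm (ltW hD)) -sqrtr_sqr ler_sqrt; last by apply: mulr_ge0.
  rewrite /D /Y /Z.
  have : 0 <= (a1 * b2 - a2 * b1) ^+ 2 + (a1 * p2 - a2 * p1) ^+ 2 + (b1 * p2 - b2 * p1) ^+ 2.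
    by rewrite !addr_ge0 ?sqr_ge0.
  move=> H; rewrite -subr_ge0; apply: le_trans H _; rewrite le_eqVlt; apply/orP; left; apply/eqP; ring.
have eY := sqr_sqrtr Y0; have eZ := sqr_sqrtr Z0.
rewrite [X in _ <= X]sqrrD eY eZ /Y /Z.
move: HD; rewrite /D; nra.
Qed.

Lemma val3_scale k a b p : 0 <= k ->
  val3 (k * a) (k * b) (k * p) = k * val3 a b p.
Proof.
move=> k0; rewrite /val3.
have -> : (k * a) ^+ 2 + (k * b) ^+ 2 + (k * p) ^+ 2 = k ^+ 2 * (a ^+ 2 + b ^+ 2 + p ^+ 2) by ring.
by rewrite sqrtrM ?sqr_ge0 // sqrtr_sqr ger0_norm.
Qed.

Lemma quad0 (a b : R) : 0 <= a -> (forall t : R, 0 <= t ^+ 2 * a + t * b) -> b = 0.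
Proof.
move=> a0 H; apply/eqP; apply: contraT => hb.
have a1 : 0 < a + 1 by lra.
have := H (- b / (a + 1)).
have -> : (- b / (a + 1)) ^+ 2 * a + (- b / (a + 1)) * b = - (b ^+ 2) / (a + 1) ^+ 2.
  by field; rewrite lt0r_neq0.
rewrite pmulr_lge0 ?invr_gt0 ?exprn_gt0 // oppr_ge0 => hb2.
have : 0 < b ^+ 2 by rewrite exprn_even_gt0.
lra.
Qed.
End R.
Arguments val3 {R}. Arguments quad0 {R}. Arguments val3_tri {R}. Arguments val3_scale {R}.
Section Op.
Variables (R : realType) (V : lmodType R[i]) (ip : V -> V -> R[i]) (A : V -> V).
Hypothesis Hlin : forall (a : R[i]) (x y z : V), ip (a *: x + y) z = a * ip x z + ip y z.
Hypothesis Hsym : forall x y : V, ip y x = (ip x y)^*.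
Hypothesis HAlin : forall (a : R[i]) (x y : V), A (a *: x + y) = a *: A x + A y.
Hypothesis HApos : forall x : V, 0 <= ip (A x) x.

Lemma lin0 (f : V -> V) : (forall (a : R[i]) (x y : V), f (a *: x + y) = a *: f x + f y) -> f 0 = 0.
Proof. by move=> H; have := H (-1) 0 0; rewrite scaler0 addr0 scaleN1r addNr. Qed.
Lemma linZ (f : V -> V) : (forall (a : R[i]) (x y : V), f (a *: x + y) = a *: f x + f y) ->
  forall a x, f (a *: x) = a *: f x.
Proof. by move=> H a x; have := H a x 0; rewrite addr0 (lin0 _ H) addr0. Qed.

Lemma ip0l z : ip 0 z = 0.
Proof. by have := Hlin (-1) 0 0 z; rewrite scaler0 addr0 mulN1r addNr. Qed.
Lemma ipZl a x z : ip (a *: x) z = a * ip x z.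
Proof. by have := Hlin a x 0 z; rewrite addr0 ip0l addr0. Qed.
Lemma ip_lin2 a x y z : ip z (a *: x + y) = Num.conj a * ip z x + ip z y.
Proof. by rewrite (Hsym (a *: x + y) z) (Hsym x z) (Hsym y z) Hlin rmorphD rmorphM. Qed.
Lemma ip0r z : ip z 0 = 0.
Proof. by rewrite Hsym ip0l rmorph0. Qed.
Lemma ipZr a x z : ip z (a *: x) = Num.conj a * ip z x.
Proof. by have := ip_lin2 a x 0 z; rewrite addr0 ip0r addr0. Qed.

Let q x := ip (A x) x.

Lemma q_exp (t : R) w x :
  q (t%:C%C *: w + x) = (t ^+ 2)%:C%C * q w + t%:C%C * (ip (A w) x + ip (A x) w) + q x.
Proof.
rewrite /q HAlin Hlin !ip_lin2 conjC_real rmorphXn /=; ring.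
Qed.

Lemma degen x : complex.Re (q x) = 0 -> forall w, ip (A w) x = 0.
Proof.
move=> hx.
have qx0 : q x = 0.
  by apply: Ceq => //; have [-> _] := ge0C (HApos x).
have key : forall w, complex.Re (ip (A w) x + ip (A x) w) = 0 /\
                     complex.Im (ip (A w) x + ip (A x) w) = 0.
  move=> w.
  have [Iw Rw] := ge0C (HApos w).
  split.
    apply: (quad0 _ _ Rw) => t.
    have [_ h] := ge0C (HApos (t%:C%C *: w + x)).
    move: h; rewrite -/(q _) q_exp qx0 addr0 /q.
    move: Iw; case: (ip (A w) w) => a b; case: (ip (A w) x) => c d; case: (ip (A x) w) => e f /= ->.
    nra.
  have [h _] := ge0C (HApos (1%:C%C *: w + x)).
  move: h; rewrite -/(q _) q_exp qx0 addr0 /q.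
  move: Iw; case: (ip (A w) w) => a b; case: (ip (A w) x) => c d; case: (ip (A x) w) => e f /= ->.
  nra.
move=> w.
have [h1 h2] := key w.
have [h3 h4] := key ('i%C *: w).
move: h3 h4; rewrite (linZ _ HAlin) ipZl ipZr.
move: h1 h2; case: (ip (A w) x) => c d; case: (ip (A x) w) => e f /= h1 h2 h3 h4.
apply: Ceq => /=; nra.
Qed.

Lemma degenF (F Fs : V -> V) :
  is_adjoint ip F Fs -> (forall x, exists y, Fs (A x) = A y) ->
  forall x, complex.Re (q x) = 0 -> ip (A (F x)) x = 0 /\ q (F x) = 0.
Proof.
move=> Had Hr x hx; split; first exact: degen x hx (F x).
have [y hy] := Hr (F x).
rewrite /q Hsym Had hy (Hsym (A y) x) (degen x hx y).
by rewrite !rmorph0.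
Qed.

Lemma qZ (k : R) v w : ip (A (k%:C%C *: v)) (k%:C%C *: w) = (k ^+ 2)%:C%C * ip (A v) w.
Proof.
by rewrite (linZ _ HAlin) ipZl ipZr conjC_real rmorphXn /= mulrA expr2.
Qed.

Lemma scaleF (F : V -> V) (HF : forall (a : R[i]) (x y : V), F (a *: x + y) = a *: F x + F y)
  x (k : R) : 0 < complex.Re (q x) -> k = (Num.sqrt (complex.Re (q x)))^-1 ->
   complex.Re (q (k%:C%C *: x)) = 1 /\
   ip (A (F (k%:C%C *: x))) (k%:C%C *: x) = (k ^+ 2)%:C%C * ip (A (F x)) x /\
   q (F (k%:C%C *: x)) = (k ^+ 2)%:C%C * q (F x).
Proof.
move=> hp hk.
have k2 : k ^+ 2 = (complex.Re (q x))^-1 by rewrite hk exprVn sqr_sqrtr // ltW.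
split; last split.
- rewrite /q qZ k2 -/(q x); move: hp; case: (q x) => a b /= hp.
  by rewrite mul0r subr0 mulVf // gt_eqF.
- by rewrite (linZ _ HF) qZ.
- by rewrite /q (linZ _ HF) qZ.
Qed.

Lemma unitE z : ipnorm (ipA ip A) z = 1 <-> complex.Re (q z) = 1.
Proof.
rewrite /ipnorm /ipA -/(q z); split => h; last by rewrite h sqrtr1.
have [_ p0] := ge0C (HApos z).
by rewrite -(sqr_sqrtr p0) h expr1n.
Qed.

Lemma exprA (c : R[i]) (p : R) : 0 <= p ->
  Num.sqrt (complex.Re `|c| ^+ 2 + Num.sqrt p ^+ 4) = val3 (complex.Re c) (complex.Im c) p.
Proof.
move=> p0; rewrite Renorm sqr_sqrtr; last by rewrite addr_ge0 ?sqr_ge0.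
by rewrite /val3 (_ : 4 = 2 * 2)%N // exprM sqr_sqrtr.
Qed.

Lemma memS (F : V -> V) x : complex.Re (q x) = 1 ->
  ((val3 (complex.Re (ip (A (F x)) x)) (complex.Im (ip (A (F x)) x)) (complex.Re (q (F x))))%:E
   <= dw_radius (ipA ip A) F)%E.
Proof.
move=> hx; apply: ereal_sup_ubound; exists x; first by apply/unitE.
rewrite /ipnorm /ipA exprA //; have [_ ->] := ge0C (HApos (F x)); done.
Qed.

Lemma scaleF2 (F : V -> V) (HF : forall (a : R[i]) (x y : V), F (a *: x + y) = a *: F x + F y)
  x : 0 < complex.Re (q x) -> exists u, complex.Re (q u) = 1 /\
   val3 (complex.Re (ip (A (F x)) x)) (complex.Im (ip (A (F x)) x)) (complex.Re (q (F x)))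
   = complex.Re (q x) *
     val3 (complex.Re (ip (A (F u)) u)) (complex.Im (ip (A (F u)) u)) (complex.Re (q (F u))).
Proof.
move=> hp; set k := (Num.sqrt (complex.Re (q x)))^-1.
have k2 : k ^+ 2 = (complex.Re (q x))^-1 by rewrite /k exprVn sqr_sqrtr // ltW.
have [hu [ha hq]] := scaleF _ HF x k hp (erefl k).
exists (k%:C%C *: x); split => //.
rewrite ha hq.
have k20 : 0 <= k ^+ 2 by rewrite sqr_ge0.
move: (ip (A (F x)) x) (q (F x)) => [c1 c2] [d1 d2] /=.
rewrite !mul0r !subr0 addr0 val3_scale // mulrA k2 mulfV ?mul1r //.
by rewrite gt_eqF.
Qed.

Lemma main_sec S T : in_BA ip A S -> in_BA ip A T ->
  dwA0 ip A (diag_op S T) = Order.max (dwA ip A S) (dwA ip A T).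
Proof.
case=> [[HSl _] [Ss [_ [HSad HSr]]]].
case=> [[HTl _] [Ts [_ [HTad HTr]]]].
rewrite /dwA0 /dwA.
apply/eqP; rewrite eq_le; apply/andP; split.
- apply: ge_ereal_sup => v [[x y] hz <-].
  have [_ tx] := ge0C (HApos x); have [_ ty] := ge0C (HApos y).
  have hts : complex.Re (q x) + complex.Re (q y) = 1.
    move: hz; rewrite /ipnorm /ipA0 /ipA /= ReD -/(q x) -/(q y) => hz.
    by rewrite -(sqr_sqrtr (addr_ge0 tx ty)) hz expr1n.
  have [_ pS0] := ge0C (HApos (S x)); have [_ pT0] := ge0C (HApos (T y)).
  rewrite /ipnorm /ipA0 /ipA /diag_op /= exprA; last by rewrite ReD addr_ge0.
  rewrite ReD ImD ReD -/(q (S x)) -/(q (T y)).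
  case: (eqVneq (complex.Re (q x)) 0) => [hx0 | hx0].
    have [a0 p0] := degenF _ _ HSad HSr x hx0.
    rewrite a0 p0 /= !add0r.
    apply: le_trans (memS T y _) _; first by lra.
    by rewrite le_max lexx orbT.
  case: (eqVneq (complex.Re (q y)) 0) => [hy0 | hy0].
    have [a0 p0] := degenF _ _ HTad HTr y hy0.
    rewrite a0 p0 /= !addr0.
    apply: le_trans (memS S x _) _; first by lra.
    by rewrite le_max lexx.
  have txp : 0 < complex.Re (q x) by rewrite lt_def hx0.
  have typ : 0 < complex.Re (q y) by rewrite lt_def hy0.
  have [u [hu hvx]] := scaleF2 _ HSl x txp.
  have [w [hw hvy]] := scaleF2 _ HTl y typ.
  have mS := memS S u hu; have mT := memS T w hw.
  move: mS mT hvx hvy.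
  set vS := val3 _ _ (complex.Re (q (S u))).
  set vT := val3 _ _ (complex.Re (q (T w))).
  move=> mS mT hvx hvy.
  apply: (@le_trans _ _ (complex.Re (q x) * vS + complex.Re (q y) * vT)%:E).
    by rewrite lee_fin -hvx -hvy; exact: val3_tri.
  case: (leP vS vT) => hST.
    apply: le_trans _ (le_trans mT _); last by rewrite le_max lexx orbT.
    by rewrite lee_fin; nra.
  apply: le_trans _ (le_trans mS _); last by rewrite le_max lexx.
  by rewrite lee_fin; nra.
- rewrite ge_max; apply/andP; split; apply: ereal_sup_le => v [x hx <-].
    exists (x, 0).
      by rewrite /ipnorm /ipA0 /ipA /= (lin0 _ HAlin) ip0l addr0.
    by rewrite /ipnorm /ipA0 /ipA /diag_op /= (lin0 _ HTl) (lin0 _ HAlin) ip0l !addr0.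
  exists (0, x).
    by rewrite /ipnorm /ipA0 /ipA /= (lin0 _ HAlin) ip0l add0r.
  by rewrite /ipnorm /ipA0 /ipA /diag_op /= (lin0 _ HSl) (lin0 _ HAlin) ip0l !add0r.
Qed.
End Op.



Theorem proposition3p4 (R : realType) (V : lmodType R[i]) (ip : V -> V -> R[i])
    (A S T : V -> V) :
  is_hilbert ip -> positive_op ip A -> in_BA ip A S -> in_BA ip A T ->
  dwA0 ip A (diag_op S T) = Order.max (dwA ip A S) (dwA ip A T).
Proof.
case=> Hlin Hsym _ _ _ [[HAlin _] HApos] HS HT.
exact: (@main_sec R V ip A Hlin Hsym HAlin HApos S T HS HT).
Qed.
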